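(* Let $G$ be a connected graph with vertex set $V=\{1,\dots,n\}$, let $A$ be a real symmetric $n\times n$ matrix with $\mathcal{G}(A)=G$ such that all nonzero off-diagonal entries of $A$ have the same sign, and let $S\subseteq V$ be a zero forcing set of $G$. Then the real Lie algebra generated by $iA$ and $\{i{\bf e}_j{\bf e}_j^T : j\in S\}$ equals $u(n)$.
   Context: ${\bf e}_j$ is the $j$th standard basis vector of $\mathbb{R}^n$. For a real symmetric $A=[a_{kj}]$, $\mathcal{G}(A)$ is the simple graph on $\{1,\dots,n\}$ with edges $\{kj: a_{kj}\neq0,\ k\neq j\}$. Zero forcing: color vertices black or white; a black vertex $v$ forces a white vertex $w$ if $w$ is the unique white neighbor of $v$, and then $w$ becomes black. $S$ is a zero forcing set if starting with exactly $S$ black, repeated forcing makes all vertices black. The real Lie algebra generated by a set of matrices is the smallest real vector space containing them closed under $[X,Y]=XY-YX$; $u(n)$ is the real Lie algebra of $n\times n$ complex skew-Hermitian matrices. *)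

(* Defs.v *)
From HB Require Import structures.
From mathcomp Require Import all_boot all_order all_algebra.
From mathcomp Require Import complex.
Set Implicit Arguments. Unset Strict Implicit. Unset Printing Implicit Defensive.
Import Order.TTheory GRing.Theory Num.Theory.
Local Open Scope ring_scope.
Local Open Scope complex_scope.

Definition graph_of (T : pzRingType) (n : nat) (A : 'M[T]_n) : rel 'I_n :=
  fun k j => (k != j) && (A k j != 0).

Definition connected_graph (n : nat) (e : rel 'I_n) : Prop :=
  forall i j : 'I_n, connect e i j.

Definition force_step (n : nat) (e : rel 'I_n) (B : {set 'I_n}) : {set 'I_n} :=
  B :|: [set w | [exists v, [&& v \in B, w \notin B, e v w &
                     [forall u, (e v u && (u \notin B)) ==> (u == w)]]]].

Definition zero_forcing_set (n : nat) (e : rel 'I_n) (S : {set 'I_n}) : Prop :=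
  exists k : nat, iter k (force_step e) S = [set: 'I_n].

Definition real_lie_closed (R : rcfType) (n : nat) (P : 'M[R[i]]_n -> Prop) : Prop :=
  [/\ P 0,
      (forall X Y, P X -> P Y -> P (X + Y)),
      (forall (r : R) X, P X -> P (r%:C *: X)) &
      (forall X Y, P X -> P Y -> P (X *m Y - Y *m X))].

Definition lie_generated (R : rcfType) (n : nat) (gens : 'M[R[i]]_n -> Prop)
  (X : 'M[R[i]]_n) : Prop :=
  forall P : 'M[R[i]]_n -> Prop,
    real_lie_closed P -> (forall Y, gens Y -> P Y) -> P X.

Definition conj_tr (R : rcfType) (n : nat) (X : 'M[R[i]]_n) : 'M[R[i]]_n :=
  map_mx (@conjc R) X^T.

Definition u_n (R : rcfType) (n : nat) (X : 'M[R[i]]_n) : Prop :=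
  conj_tr X = - X.

Definition cmx (R : rcfType) (n : nat) (A : 'M[R]_n) : 'M[R[i]]_n :=
  map_mx (fun x : R => x%:C) A.

(* Main.v *)
Require Import Defs.
From HB Require Import structures.
From mathcomp Require Import all_boot all_order all_algebra.
From mathcomp Require Import complex.
From mathcomp Require Import ring.
Import Order.TTheory GRing.Theory Num.Theory.
Set Implicit Arguments. Unset Strict Implicit. Unset Printing Implicit Defensive.
Local Open Scope ring_scope.
Local Open Scope complex_scope.

Notation iC := (Complex 0 1).

Definition cm (T : pzRingType) n (X Y : 'M[T]_n) := X *m Y - Y *m X.

Lemma dmulE (T : pzRingType) n (a b p q : 'I_n) (Y : 'M[T]_n) :
  (delta_mx a b *m Y) p q = (p == a)%:R * Y b q.
Proof.
rewrite mxE (bigD1 b) //= big1 ?addr0 => [|r rb]; rewrite mxE.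
  by rewrite eqxx andbT.
by rewrite (negbTE rb) andbF mul0r.
Qed.

Lemma muldE (T : pzRingType) n (a b p q : 'I_n) (Y : 'M[T]_n) :
  (Y *m delta_mx a b) p q = Y p a * (q == b)%:R.
Proof.
rewrite mxE (bigD1 a) //= big1 ?addr0 => [|r rb]; rewrite mxE.
  by rewrite eqxx.
by rewrite (negbTE rb) mulr0.
Qed.

Lemma cmdE (T : pzRingType) n (a b p q : 'I_n) (Y : 'M[T]_n) :
  (cm (delta_mx a b) Y) p q = (p == a)%:R * Y b q - Y p a * (q == b)%:R.
Proof. rewrite /cm -dmulE -muldE. by rewrite !mxE. Qed.

Lemma cmZl (T : comPzRingType) n c (X Y : 'M[T]_n) : cm (c *: X) Y = c *: cm X Y.
Proof. by rewrite /cm scalerBr -scalemxAl -scalemxAr. Qed.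
Lemma cmZr (T : comPzRingType) n c (X Y : 'M[T]_n) : cm X (c *: Y) = c *: cm X Y.
Proof. by rewrite /cm scalerBr -scalemxAl -scalemxAr. Qed.
Lemma cmBl (T : pzRingType) n (X X' Y : 'M[T]_n) : cm (X - X') Y = cm X Y - cm X' Y.
Proof. by rewrite /cm mulmxBl mulmxBr !opprB addrACA [RHS]addrACA [- _ - _]addrC. Qed.

Lemma ii (R : rcfType) : iC * iC = -1 :> R[i].
Proof. by rewrite -expr2 sqr_i. Qed.

Ltac bool_cases :=
  repeat (rewrite ?eqxx /=; match goal with
   | H : is_true (?x != ?x) |- _ => by rewrite eqxx in H
   | H : ?x <> ?x |- _ => by case: H
   | |- context [?x == ?y] =>
       lazymatch type of x with
       | ordinal _ => case: (x =P y) => [?|?]; subst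
       end
   end).

Lemma mxZE (T : pzRingType) m n c (M : 'M[T]_(m,n)) p q : (c *: M) p q = c * M p q.
Proof. by rewrite mxE. Qed.
Lemma mxDE (T : pzRingType) m n (M N : 'M[T]_(m,n)) p q : (M + N) p q = M p q + N p q.
Proof. by rewrite mxE. Qed.
Lemma mxBE (T : pzRingType) m n (M N : 'M[T]_(m,n)) p q : (M - N) p q = M p q - N p q.
Proof. by rewrite !mxE. Qed.
Lemma mxdE (T : pzRingType) n (a b p q : 'I_n) : (delta_mx a b : 'M[T]_n) p q = ((p == a) && (q == b))%:R.
Proof. by rewrite mxE. Qed.




Lemma h2 (R : rcfType) : (2^-1 : R)%:C * 2 = 1 :> R[i].
Proof. by rewrite -(rmorph_nat (real_complex R) 2) -rmorphM mulVf ?rmorph1 // pnatr_eq0. Qed.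

Definition pib (R : rcfType) n (b : 'I_n) (Z : 'M[R[i]]_n) :=
  Z + cm (iC *: delta_mx b b) (cm (iC *: delta_mx b b) Z).

Lemma pibE (R : rcfType) n (b p q : 'I_n) (Z : 'M[R[i]]_n) :
  pib b Z p q = if (p == b) == (q == b) then Z p q else 0.
Proof.
rewrite /pib !(cmZl, cmZr). rewrite mxDE !mxZE !cmdE.
bool_cases; rewrite /= ?mulrA ?ii; ring.
Qed.




Lemma PD (R : rcfType) n (P : 'M[R[i]]_n -> Prop) : real_lie_closed P ->
  forall X Y, P X -> P Y -> P (X + Y).
Proof. by case. Qed.
Lemma PZ (R : rcfType) n (P : 'M[R[i]]_n -> Prop) : real_lie_closed P ->
  forall (r : R) X, P X -> P (r%:C *: X).
Proof. by case. Qed.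
Lemma PC (R : rcfType) n (P : 'M[R[i]]_n -> Prop) : real_lie_closed P ->
  forall X Y, P X -> P Y -> P (cm X Y).
Proof. by case. Qed.
Lemma P0 (R : rcfType) n (P : 'M[R[i]]_n -> Prop) : real_lie_closed P -> P 0.
Proof. by case. Qed.
Lemma PN (R : rcfType) n (P : 'M[R[i]]_n -> Prop) : real_lie_closed P ->
  forall X, P X -> P (- X).
Proof. move=> hP X hX; have := PZ hP (-1) hX. by rewrite rmorphN1 scaleN1r. Qed.
Lemma PB (R : rcfType) n (P : 'M[R[i]]_n -> Prop) : real_lie_closed P ->
  forall X Y, P X -> P Y -> P (X - Y).
Proof. by move=> hP X Y hX hY; apply: PD => //; apply: PN. Qed.
Lemma Pinv (R : rcfType) n (P : 'M[R[i]]_n -> Prop) : real_lie_closed P ->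
  forall (r : R) X, r != 0 -> P (r%:C *: X) -> P X.
Proof.
move=> hP r X r0 hX; have := PZ hP (r^-1) hX.
by rewrite scalerA -rmorphM mulVf // rmorph1 scale1r.
Qed.
Lemma Psum (R : rcfType) n (P : 'M[R[i]]_n -> Prop) (I : finType) (F : I -> 'M[R[i]]_n) :
  real_lie_closed P -> (forall j, P (F j)) -> P (\sum_j F j).
Proof.
move=> hP hF; apply: (big_ind P); [exact: P0 | exact: PD |] => j _; exact: hF.
Qed.

Lemma foldE (R : rcfType) n (s : seq 'I_n) (Z : 'M[R[i]]_n) p q :
  foldr (@pib R n) Z s p q = if all (fun b => (p == b) == (q == b)) s then Z p q else 0.
Proof.
elim: s => [|b s IH] //=; rewrite pibE IH.
by case: ((p == b) == (q == b)); case: all.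
Qed.

Lemma Pfold (R : rcfType) n (P : 'M[R[i]]_n -> Prop) (s : seq 'I_n) (Z : 'M[R[i]]_n) :
  real_lie_closed P -> (forall b, b \in s -> P (iC *: delta_mx b b)) -> P Z ->
  P (foldr (@pib R n) Z s).
Proof.
move=> hP; elim: s => [|b s IH] //= hs hZ.
have hf : P (foldr (@pib R n) Z s) by apply: IH => // c cs; apply: hs; rewrite inE cs orbT.
have hb : P (iC *: delta_mx b b) by apply: hs; rewrite inE eqxx.
by apply: PD => //; apply: PC => //; apply: PC.
Qed.




Lemma cmxE (R : rcfType) n (A : 'M[R]_n) p q : cmx A p q = (A p q)%:C.
Proof. by rewrite mxE. Qed.

Lemma key_id (R : rcfType) n (v w : 'I_n) : v != w ->
  cm (delta_mx v w - delta_mx w v : 'M[R[i]]_n)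
     (cm (iC *: delta_mx v v) (delta_mx v w - delta_mx w v)) =
  2 *: (iC *: delta_mx v v - iC *: delta_mx w w).
Proof.
move=> vw; apply/matrixP => p q; rewrite [in RHS]mxZE [in RHS]mxBE ![in RHS]mxZE !mxdE.
rewrite cmBl !cmZl mxBE !cmdE !mxZE !cmdE !mxBE !mxdE.
bool_cases; rewrite /= ?mulrA ?ii; ring.
Qed.

Lemma force_one (R : rcfType) n (P : 'M[R[i]]_n -> Prop) (A : 'M[R]_n)
   (B : {set 'I_n}) v w :
 real_lie_closed P -> A^T = A -> P (iC *: cmx A) ->
 (forall b, b \in B -> P (iC *: delta_mx b b)) ->
 v \in B -> w \notin B -> graph_of A v w ->
 (forall u, (graph_of A v u && (u \notin B)) ==> (u == w)) ->
 P (iC *: delta_mx w w).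
Proof.
move=> hP hA hAi hB vB wB evw huniq.
have /andP[vw Avw] := evw.
have sym : forall p q, A q p = A p q.
  by move=> p q; move/matrixP: hA => h; rewrite -h mxE.
set s := enum (B :\ v).
have hs : forall b, b \in s -> P (iC *: delta_mx b b).
  by move=> b; rewrite mem_enum in_setD1 => /andP[_ /hB].
set Z0 := cm (iC *: delta_mx v v) (iC *: cmx A).
have PZ0 : P Z0 by apply: PC => //; apply: hB.
have cond1 : forall q, q != v -> all (fun b => (v == b) == (q == b)) s = (q \notin B).
  move=> q qv; apply/allP/idP => [H|qB b].
    apply/negP => qB; have := H q; rewrite mem_enum in_setD1 qv qB eqxx => /(_ isT).
    by rewrite [v == q]eq_sym (negbTE qv).
  rewrite /s mem_enum in_setD1 => /andP[bv bB]; rewrite [v == b]eq_sym (negbTE bv).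
  have qb : q != b by apply: contraNneq qB => ->.
  by rewrite (negbTE qb).
have cond2 : forall q, q != v -> all (fun b => (q == b) == (v == b)) s = (q \notin B).
  move=> q qv; rewrite -(cond1 q qv); apply: eq_all => b; by rewrite eq_sym.
have zero : forall q, q \notin B -> q != w -> A v q = 0.
  move=> q qB qw; apply/eqP; apply: contraNT qw => Aq.
  have := huniq q; rewrite qB andbT /graph_of Aq andbT.
  have [vq|vq] := eqVneq v q; last by move/implyP/(_ isT).
  by rewrite -vq vB in qB.
have eqZ1 : foldr (@pib R n) Z0 s = (- A v w)%:C *: (delta_mx v w - delta_mx w v).
  apply/matrixP => p q; rewrite foldE [in RHS]mxZE [in RHS]mxBE !mxdE.
  rewrite /Z0 cmZl cmZr mxZE mxZE cmdE !cmxE.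
  have wv : (w == v) = false by rewrite eq_sym (negbTE vw).
  have [->|pv] := eqVneq p v.
    have [->|qv] := eqVneq q v.
      by rewrite (negbTE vw) /=; case: all; ring.
    rewrite cond1 // /=.
    have [->|qw] := eqVneq q w.
      by rewrite wB rmorphN /= ?andbF ?andbT /= mulrA ii; ring.
    rewrite /= ?andbF ?andbT /=; case qB: (q \notin B).
      by rewrite (zero q) // rmorph0; ring.
    ring.
  have [->|qv] := eqVneq q v.
    rewrite cond2 // (sym v p) /=.
    have [->|pw] := eqVneq p w.
      by rewrite wB rmorphN /= ?andbF ?andbT mulrA ii; ring.
    rewrite /= ?andbF ?andbT /=; case pB: (p \notin B).
      by rewrite (zero p) // rmorph0; ring.
    ring.
  by rewrite /= ?andbF ?andbT /=; case: all; ring.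
pose F : 'M[R[i]]_n := delta_mx v w - delta_mx w v.
have PF : P F.
  apply: (Pinv hP (r := - A v w)); first by rewrite oppr_eq0.
  by rewrite -eqZ1; apply: Pfold.
have PH : P (cm (iC *: delta_mx v v) F) by apply: PC => //; apply: hB.
have PFH : P (cm F (cm (iC *: delta_mx v v) F)) by apply: PC.
have key := @key_id R n v w vw.
have -> : iC *: delta_mx w w = iC *: delta_mx v v - (2^-1 : R)%:C *: cm F (cm (iC *: delta_mx v v) F).
  by rewrite key scalerA h2 scale1r opprB addrCA subrr addr0.
by apply: PB => //; [apply: hB | apply: PZ].
Qed.




Lemma edge_id (R : rcfType) n (A : 'M[R]_n) (j k : 'I_n) :
  (forall p q, A q p = A p q) -> j != k ->
  cm (iC *: delta_mx k k) (cm (iC *: delta_mx j j) (iC *: cmx A)) =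
  (A j k)%:C *: (iC *: (delta_mx j k + delta_mx k j)).
Proof.
move=> sym jk; apply/matrixP => p q.
rewrite [in RHS]mxZE [in RHS]mxZE [in RHS]mxDE !mxdE.
rewrite !cmZl !cmZr !mxZE !cmdE !cmxE.
bool_cases; rewrite /= ?mulrA ?ii ?(sym j k); ring.
Qed.

Lemma FG_id (R : rcfType) n (j k : 'I_n) : j != k ->
  cm (iC *: delta_mx j j) (iC *: (delta_mx j k + delta_mx k j)) =
  - (delta_mx j k - delta_mx k j : 'M[R[i]]_n).
Proof.
move=> jk; apply/matrixP => p q.
rewrite [in RHS]mxE [in RHS]mxBE !mxdE.
rewrite !cmZl !cmZr !mxZE cmdE !mxDE !mxdE.
bool_cases; rewrite /= ?mulrA ?ii; ring.
Qed.

Lemma GF_id (R : rcfType) n (j k : 'I_n) : j != k ->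
  cm (iC *: delta_mx j j) (delta_mx j k - delta_mx k j) =
  iC *: (delta_mx j k + delta_mx k j : 'M[R[i]]_n).
Proof.
move=> jk; apply/matrixP => p q.
rewrite [in RHS]mxZE [in RHS]mxDE !mxdE.
rewrite !cmZl !mxZE cmdE !mxBE !mxdE.
bool_cases; rewrite /= ?mulrA ?ii; ring.
Qed.

Lemma trans_id (R : rcfType) n (j k l : 'I_n) : j != k -> k != l -> j != l ->
  cm (delta_mx j k - delta_mx k j) (delta_mx k l - delta_mx l k) =
  (delta_mx j l - delta_mx l j : 'M[R[i]]_n).
Proof.
move=> jk kl jl; apply/matrixP => p q.
rewrite [in RHS]mxBE !mxdE.
rewrite cmBl mxBE !cmdE !mxBE !mxdE.
bool_cases; rewrite /=; ring.
Qed.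


Lemma sum2E (T : comPzRingType) n (f g : 'I_n -> 'I_n -> T) (p q : 'I_n) :
  \sum_j \sum_k (f j k * ((p == j) && (q == k))%:R + g j k * ((p == k) && (q == j))%:R)
  = f p q + g q p.
Proof.
have e1 : forall h : 'I_n -> 'I_n -> T,
    \sum_j \sum_k h j k * ((p == j) && (q == k))%:R = h p q.
  move=> h; rewrite (bigD1 p) //= [X in _ + X]big1 ?addr0 => [|j jp]; last first.
    by apply: big1 => k _; rewrite eq_sym (negbTE jp) mulr0.
  rewrite (bigD1 q) //= [X in _ + X]big1 ?addr0 => [|k kq]; last by rewrite eqxx [q == k]eq_sym (negbTE kq) mulr0.
  by rewrite !eqxx mulr1.
have e2 : forall h : 'I_n -> 'I_n -> T,
    \sum_j \sum_k h j k * ((p == k) && (q == j))%:R = h q p.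
  move=> h; rewrite exchange_big /=.
  exact: (e1 (fun k j => h j k)).
rewrite (eq_bigr (fun j => \sum_k f j k * ((p == j) && (q == k))%:R +
                            \sum_k g j k * ((p == k) && (q == j))%:R)); last first.
  by move=> j _; rewrite big_split.
by rewrite big_split /= e1 e2.
Qed.

Lemma conj_i (R : rcfType) : (conjc (iC : R[i])) = - iC.
Proof. by apply/eqP; rewrite eq_complex /= oppr0 !eqxx. Qed.

Lemma unE (R : rcfType) n (X : 'M[R[i]]_n) :
  u_n X <-> forall p q, (conjc (X q p)) = - X p q.
Proof.
split => [/matrixP h p q | h]; first by have := h p q; rewrite !mxE.
by apply/matrixP => p q; rewrite !mxE h.
Qed.

Lemma un_closed (R : rcfType) n : real_lie_closed (@u_n R n).
Proof.
split.
- by apply/unE => p q; rewrite !mxE rmorph0 oppr0.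
- move=> X Y /unE hX /unE hY; apply/unE => p q; rewrite !mxE opprD -hX -hY; exact: rmorphD.
- move=> r X /unE hX; apply/unE => p q; rewrite !mxE -mulrN -hX -[in RHS](conjc_real r); exact: rmorphM.
- move=> X Y hX hY; rewrite /u_n /conj_tr in hX hY *.
  rewrite linearB /= map_mxB !trmx_mul !map_mxM hX hY.
  by rewrite !mulmxN !mulNmx !opprK opprB.
Qed.


Lemma conjM (R : rcfType) (x y : R[i]) : conjc (x * y) = conjc x * conjc y.
Proof. exact: rmorphM. Qed.
Lemma conjn (R : rcfType) (m : nat) : (conjc (m%:R : R[i])) = m%:R.
Proof. exact: rmorph_nat. Qed.

Theorem corollary4p2 (R : rcfType) (n : nat) (A : 'M[R]_n) (S : {set 'I_n}) :
  A^T = A ->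
  connected_graph (graph_of A) ->
  ((forall k j : 'I_n, k != j -> 0 <= A k j) \/
   (forall k j : 'I_n, k != j -> A k j <= 0)) ->
  zero_forcing_set (graph_of A) S ->
  forall X : 'M[R[i]]_n,
    lie_generated
      (fun Y => Y = (Complex 0 1 : R[i]) *: cmx A \/
                exists2 j : 'I_n, j \in S & Y = (Complex 0 1 : R[i]) *: delta_mx j j)
      X
    <-> u_n X.
Proof.
move=> hA hconn _ hzf X.
have sym : forall p q, A q p = A p q.
  by move=> p q; move/matrixP: hA => h; rewrite -h mxE.
split.
  move=> hX; apply: hX; first exact: un_closed.
  move=> Y [->|[j _ ->]]; apply/unE => p q; rewrite !mxE conjM conj_i.
    by rewrite conjc_real sym mulNr.
  by rewrite conjn andbC mulNr.
move=> hX P hP hgen.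
have hAi : P (iC *: cmx A) by apply: hgen; left.
have hS : forall b, b \in S -> P (iC *: delta_mx b b).
  by move=> b bS; apply: hgen; right; exists b.
have hD : forall b, P (iC *: delta_mx b b).
  case: hzf => k hk.
  suff H : forall b, b \in iter k (force_step (graph_of A)) S -> P (iC *: delta_mx b b).
    by move=> b; apply: H; rewrite hk inE.
  elim: k {hk} => [|k IH] b /=; first exact: hS.
  rewrite /force_step in_setU => /orP[/IH //|].
  rewrite inE => /existsP[v /and4P[vB wB evw /forallP hu]].
  exact: (force_one hP hA hAi IH vB wB evw hu).
have hE : forall j k, graph_of A j k -> P (delta_mx j k - delta_mx k j).
  move=> j k /andP[jk Ajk].
  have h1 := PC hP (hD k) (PC hP (hD j) hAi).
  rewrite (edge_id sym jk) in h1.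
  have h2 := Pinv hP Ajk h1.
  have h3 := PC hP (hD j) h2.
  rewrite (@FG_id R n j k jk) in h3.
  by have := PN hP h3; rewrite opprK.
have hF : forall j k, P (delta_mx j k - delta_mx k j).
  move=> j k; have /connectP[pth hpth ->] := hconn j k.
  suff : j = last j pth \/ P (delta_mx j (last j pth) - delta_mx (last j pth) j).
    by case=> // <-; rewrite subrr; apply: P0.
  elim: pth j hpth => [|y pth IH] x /=; first by left.
  move=> /andP[exy hp]; have /andP[xy _] := exy.
  case: (IH y hp) => [<-|hyz]; first by right; apply: hE.
  set z := last y pth in hyz *.
  have [xz|xz] := eqVneq x z; first by left.
  right; have [yz|yz] := eqVneq y z; first by rewrite -yz; apply: hE.
  rewrite -(@trans_id R n x y z xy yz xz); apply: PC => //; exact: hE.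
have hG : forall j k, P (iC *: (delta_mx j k + delta_mx k j)).
  move=> j k; have [<-|jk] := eqVneq j k.
    by rewrite scalerDr; apply: PD.
  by rewrite -(@GF_id R n j k jk); apply: PC.
have -> : X = (2^-1 : R)%:C *: (2 *: X) by rewrite scalerA h2 scale1r.
apply: PZ => //.
have -> : 2 *: X = \sum_j \sum_k ((@complex.Re R (X j k))%:C *: (delta_mx j k - delta_mx k j)
                        + (@complex.Im R (X j k))%:C *: (iC *: (delta_mx j k + delta_mx k j))).
  apply/matrixP => p q; rewrite mxZE summxE.
  rewrite (eq_bigr (fun j => \sum_k (((@complex.Re R (X j k))%:C + (@complex.Im R (X j k))%:C * iC) * ((p == j) && (q == k))%:R
       + ((@complex.Im R (X j k))%:C * iC - (@complex.Re R (X j k))%:C) * ((p == k) && (q == j))%:R))); last first.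
    move=> j _; rewrite summxE; apply: eq_bigr => k _.
    rewrite mxDE !mxZE mxBE mxDE !mxdE; ring.
  rewrite sum2E.
  have /unE hu := hX; have := hu p q; move/(congr1 (@conjc R)); rewrite conjcK => hqp.
  rewrite hqp. case: (X p q) => a b /=.
  rewrite [a +i* b]complexE /= !rmorphN opprK; ring.
apply: Psum => // j; apply: Psum => // k.
by apply: PD => //; apply: PZ.
Qed.
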